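(* Let $X$ be a $d$-dimensional clique complex, $3d_1\le d-2$, $X$ $d_1$-well-connected, and $\nu:\widetilde{F^{d_1}X}\to F^{d_1}X$ an $\ell$-covering map. For a face $r\in X$ let $Z_r=\nu^{-1}(F^{d_1}X_r)\subseteq\widetilde{F^{d_1}X}$ (the induced subcomplex on the preimage of the vertices of $F^{d_1}(X_r)$). Then: (1) for every nonempty $r\in X$ of dimension $\le d_1$, $Z_r$ has exactly $\ell$ connected components $Z_r^1,\dots,Z_r^\ell$, and $\nu$ restricted to each $Z_r^i$ is an isomorphism onto $F^{d_1}X_r$; (2) for all nonempty $r\subseteq s$ of dimension $\le d_1$ there is a permutation $\pi_{r,s}$ of $[\ell]$ such that $Z_s^i\subseteq Z_r^j$ if and only if $\pi_{r,s}(i)=j$.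
   Context: $X(i)$ = faces with $i+1$ vertices; link $X_r=\{t\setminus r:r\subseteq t\in X\}$. Clique complex: every set of pairwise adjacent vertices is a face. Faces complex $F^{d_1}X$: vertex set $X(d_1)$, faces the sets of pairwise disjoint $d_1$-faces whose union is in $X$; $F^{d_1}X_r:=F^{d_1}(X_r)$, viewed as a subcomplex of $F^{d_1}X$ (a vertex $s$ of it corresponds to $s\in X(d_1)$ with $s\cap r=\emptyset$, $s\cup r\in X$). Covering map: a surjective simplicial homomorphism on vertices that restricts to an isomorphism between the link of each vertex and the link of its image; $\ell$-cover if each vertex has $\ell$ preimages. Simply connected: connected, and every $\ell$-cover is a disjoint union of $\ell$ components each mapped isomorphically. $d_1$-well-connected: for every face $r$ of dimension $\le d_1$ (including $\emptyset$) $F^{d_1}(X_r)$ is connected, and for every vertex $r$ it is simply connected. *)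

(* Defs.v *)
From mathcomp Require Import all_boot fingroup perm.
Set Implicit Arguments. Unset Strict Implicit. Unset Printing Implicit Defensive.

Section Complexes.
Variable T : finType.
Implicit Types (K : {set {set T}}) (t r : {set T}).

Definition simplicial_complex K := forall t s : {set T}, t \in K -> s \subset t -> s \in K.

Definition vertices K : {set T} := [set x | [set x] \in K].

Definition dimension K (d : nat) :=
  (forall t, t \in K -> #|t| <= d.+1) /\ exists2 t, t \in K & #|t| = d.+1.

Definition clique_complex K :=
  forall t, t \subset vertices K ->
    (forall x y, x \in t -> y \in t -> x != y -> [set x; y] \in K) -> t \in K.

Definition link K r : {set {set T}} := [set t :\: r | t in [set t in K | r \subset t]].

Definition induced K (S : {set T}) : {set {set T}} := [set t in K | t \subset S].

Definition adj K : rel T := fun x y => (x != y) && ([set x; y] \in K).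
Definition comp K x : {set T} := [set y in vertices K | connect (adj K) x y].
Definition components K : {set {set T}} := [set comp K x | x in vertices K].
Definition connected K :=
  (vertices K != set0) /\
  forall x y, x \in vertices K -> y \in vertices K -> connect (adj K) x y.

(* faces complex F^{d1} K: vertices are the d1-faces of K; faces are sets of
   pairwise disjoint d1-faces whose union is a face of K *)
Definition faces_complex (d1 : nat) K : {set {set {set T}}} :=
  [set S : {set {set T}} |
     [forall s in S, (s \in K) && (#|s| == d1.+1)] &&
     [forall s in S, forall s' in S, (s != s') ==> [disjoint s & s']] &&
     (\bigcup_(s in S) s \in K)].
End Complexes.

Section Maps.
Variables (W T : finType).
Implicit Types (Y : {set {set W}}) (K : {set {set T}}) (f : W -> T).

Definition iso_on Y K f :=
  [/\ {in vertices Y &, injective f},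
      f @: vertices Y = vertices K &
      forall t : {set W}, t \subset vertices Y -> (t \in Y) = (f @: t \in K)].

Definition covering_map Y K f :=
  [/\ forall t : {set W}, t \in Y -> f @: t \in K,
      f @: vertices Y = vertices K &
      forall w, w \in vertices Y -> iso_on (link Y [set w]) (link K [set f w]) f].

Definition lcover Y K f (l : nat) :=
  covering_map Y K f /\
  forall v, v \in vertices K -> #|[set w in vertices Y | f w == v]| = l.
End Maps.

Definition simply_connected (T : finType) (K : {set {set T}}) :=
  connected K /\
  forall (W : finType) (Y : {set {set W}}) (f : W -> T) (l : nat),
    simplicial_complex Y -> lcover Y K f l ->
    #|components Y| = l /\
    forall C, C \in components Y -> iso_on (induced Y C) K f.

Definition well_connected (T : finType) (d1 : nat) (X : {set {set T}}) :=
  (forall r, r \in X -> #|r| <= d1.+1 -> connected (faces_complex d1 (link X r))) /\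
  (forall v, [set v] \in X -> simply_connected (faces_complex d1 (link X [set v]))).

(* Main.v *)
Require Import Defs.
From mathcomp Require Import all_boot fingroup perm.
Set Implicit Arguments. Unset Strict Implicit. Unset Printing Implicit Defensive.

Section Gen.
Variable T : finType.
Implicit Types (K : {set {set T}}) (t r s : {set T}).

Lemma link_mem K r t : (t \in link K r) = [disjoint t & r] && (t :|: r \in K).
Proof.
apply/imsetP/andP => [[u] | [dj tr]].
  rewrite inE => /andP [uK ru] ->; split.
    by rewrite -setI_eq0 setDE -setIA (setIC _ r) setICr setI0.
  suff -> : u :\: r :|: r = u by [].
  by rewrite setUC -{2}(setID u r) (setIidPr ru) setUC.
exists (t :|: r); first by rewrite inE tr subsetUr.
by rewrite setDUl setDv setU0; apply/esym/setDidPl.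
Qed.

Lemma link_sub K r : simplicial_complex K -> {subset link K r <= K}.
Proof. by move=> HK t; rewrite link_mem => /andP [_ /HK]; apply; rewrite subsetUl. Qed.

Lemma link_mono K r r' : simplicial_complex K -> r \subset r' ->
  {subset link K r' <= link K r}.
Proof.
move=> HK rr' t; rewrite !link_mem => /andP [dj tK]; apply/andP; split.
  exact: disjointWr dj.
by apply: (HK _ _ tK); apply: setUS.
Qed.

Lemma link_simpl K r : simplicial_complex K -> simplicial_complex (link K r).
Proof.
move=> HK t u; rewrite !link_mem => /andP [dj tK] ut; apply/andP; split.
  exact: disjointWl dj.
by apply: (HK _ _ tK); apply: setSU.
Qed.

Lemma vert_link1 K v x : (x \in vertices (link K [set v])) = (x != v) && ([set x; v] \in K).
Proof.
rewrite inE link_mem disjoints1 inE.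
by [].
Qed.

Lemma vert_induced K S x : (x \in vertices (induced K S)) = (x \in vertices K) && (x \in S).
Proof. by rewrite !inE sub1set. Qed.

Lemma vert_F d1 K s : (s \in vertices (faces_complex d1 K)) = (s \in K) && (#|s| == d1.+1).
Proof.
rewrite !inE big_set1.
apply/andP/andP => [[/andP [/forall_inP H _] sK] | [sK ss]].
  by split => //; have /andP [] := H s (set11 s).
split => //; apply/andP; split.
  by apply/forall_inP => s'; rewrite inE => /eqP ->; rewrite sK.
by apply/forall_inP => s1; rewrite inE => /eqP ->; apply/forall_inP => s2; rewrite inE => /eqP ->; rewrite eqxx.
Qed.

End Gen.

Lemma induced_simpl (T : finType) (K : {set {set T}}) S :
  simplicial_complex K -> simplicial_complex (induced K S).
Proof.
move=> HK t u; rewrite !inE => /andP [tK tS] ut.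
by rewrite (HK _ _ tK ut) (subset_trans ut tS).
Qed.

Section F.
Variable T : finType.
Implicit Types (K : {set {set T}}) (t r s : {set T}).

Lemma F_simpl d1 K : simplicial_complex K -> simplicial_complex (faces_complex d1 K).
Proof.
move=> HK S S'; rewrite !inE => /andP [/andP [/forall_inP H1 /forall_inP H2] H3] sub.
apply/andP; split; first (apply/andP; split).
- by apply/forall_inP => s sS; apply: H1; apply: (subsetP sub).
- apply/forall_inP => s sS; apply/forall_inP => s' s'S.
  by have /forall_inP := H2 s (subsetP sub _ sS); apply; apply: (subsetP sub).
- apply: (HK _ _ H3); apply/bigcupsP => s sS; exact: (bigcup_max s (subsetP sub _ sS)).
Qed.

Lemma F_mono d1 K K' : {subset K <= K'} -> {subset faces_complex d1 K <= faces_complex d1 K'}.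
Proof.
move=> KK S; rewrite !inE => /andP [/andP [/forall_inP H1 H2] H3].
rewrite H2 (KK _ H3) andbT andbT.
apply/forall_inP => s sS.
by have /andP [sK ->] := H1 s sS; rewrite (KK _ sK).
Qed.

Lemma F_full d1 X r : simplicial_complex X -> clique_complex X -> r \in X ->
  forall S, S \in faces_complex d1 X -> S \subset vertices (faces_complex d1 (link X r)) ->
  S \in faces_complex d1 (link X r).
Proof.
move=> HX Hcl rX S; rewrite !inE => /andP [/andP [/forall_inP H1 H2] H3] sub.
have Hv s : s \in S -> [disjoint s & r] && (s :|: r \in X).
  move=> sS; have := subsetP sub s sS; rewrite vert_F => /andP [].
  by rewrite link_mem.
rewrite H2 andbT; apply/andP; split.
  apply/forall_inP => s sS; have := subsetP sub s sS; by rewrite vert_F.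
rewrite link_mem; apply/andP; split.
  rewrite -setI_eq0; apply/eqP/setP => x; rewrite !inE.
  apply/negbTE; apply/andP => [[/bigcupP [s sS xs] xr]].
  have /andP [dj _] := Hv s sS.
  by move: dj; rewrite -setI_eq0 => /eqP/setP/(_ x); rewrite !inE xs xr.
have vX x t : t \in X -> x \in t -> [set x] \in X.
  by move=> tX xt; apply: (HX _ _ tX); rewrite sub1set.
apply: Hcl.
  apply/subsetP => x; rewrite inE => /orP [xU | xr].
    by rewrite inE; apply: (vX x _ H3).
  by rewrite inE; apply: (vX x _ rX).
move=> x y; rewrite !inE => xin yin xy.
have pairU t : t \in X -> x \in t -> y \in t -> [set x; y] \in X.
  move=> tX xt yt; apply: (HX _ _ tX).
  by apply/subsetP => z; rewrite !inE => /orP [] /eqP ->.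
case/orP: xin => [xU | xr]; case/orP: yin => [yU | yr].
- exact: (pairU _ H3).
- case/bigcupP: xU => s sS xs; have /andP [_ sr] := Hv s sS.
  by apply: (pairU _ sr); rewrite inE ?xs ?yr ?orbT.
- case/bigcupP: yU => s sS ys; have /andP [_ sr] := Hv s sS.
  by apply: (pairU _ sr); rewrite inE ?ys ?xr ?orbT.
- exact: (pairU _ rX).
Qed.

End F.

Section Maps.
Variables (W T : finType).
Implicit Types (Y A : {set {set W}}) (K B : {set {set T}}) (f : W -> T).

Lemma imset_preim f (A : {set W}) (B : {set T}) :
  f @: (A :&: [set x | f x \in B]) = f @: A :&: B.
Proof.
apply/setP => y; apply/imsetP/setIP => [[x] | [/imsetP [x xA ->] yB]].
  by rewrite !inE => /andP [xA xB] ->; split => //; apply: imset_f.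
by exists x => //; rewrite !inE xA yB.
Qed.

Definition full B' B := forall S, S \in B -> S \subset vertices B' -> S \in B'.

Lemma vert_sub K K' : {subset K' <= K} -> vertices K' \subset vertices K.
Proof. by move=> KK; apply/subsetP => x; rewrite !inE; apply: KK. Qed.

Lemma imset_sub_vert f (t : {set W}) K' :
  t \subset [set w | f w \in vertices K'] -> f @: t \subset vertices K'.
Proof.
by move=> tP; apply/subsetP => y /imsetP [x xt ->]; have := subsetP tP x xt; rewrite inE.
Qed.

Lemma iso_restr A B B' f : iso_on A B f -> {subset B' <= B} -> full B' B ->
  iso_on (induced A [set w | f w \in vertices B']) B' f.
Proof.
move=> [Hinj Him Hf] BB Hfull.
have HV : vertices (induced A [set w | f w \in vertices B']) =
          vertices A :&: [set w | f w \in vertices B'].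
  by apply/setP => x; rewrite vert_induced in_setI.
split.
- by move=> x y; rewrite HV => /setIP [xA _] /setIP [yA _]; apply: Hinj.
- rewrite HV imset_preim Him; apply/setIidPr; exact: vert_sub.
- move=> t; rewrite HV subsetI => /andP [tA tP].
  rewrite inE tP andbT Hf //.
  apply/idP/idP => [H|]; last by apply: BB.
  by apply: Hfull => //; apply: imset_sub_vert.
Qed.

Lemma link_full K K' (u : {set T}) v : {subset K' <= K} -> full K' K ->
  u \subset vertices K' -> v \in vertices K' ->
  (u \in link K' [set v]) = (u \in link K [set v]).
Proof.
move=> KK Hfull uV vV; rewrite !link_mem; congr (_ && _).
apply/idP/idP; first by apply: KK.
by move=> H; apply: Hfull => //; rewrite subUset uV sub1set.
Qed.

Lemma cover_restr Y K K' f l : lcover Y K f l -> simplicial_complex K' ->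
  {subset K' <= K} -> full K' K ->
  lcover (induced Y [set w | f w \in vertices K']) K' f l.
Proof.
move=> [[Hf Him Hlk] Hcnt] HK' KK Hfull.
set P := [set w | f w \in vertices K'].
have HV : vertices (induced Y P) = vertices Y :&: P.
  by apply/setP => x; rewrite vert_induced in_setI.
have VK' : vertices K' = vertices K :&: vertices K'.
  by apply/esym/setIidPr; exact: vert_sub.
split; first split.
- move=> t; rewrite inE => /andP [tY tP].
  by apply: Hfull; [apply: Hf | apply: imset_sub_vert].
- by rewrite HV imset_preim Him -VK'.
- move=> w; rewrite HV => /setIP [wY wP].
  have [Hinj Himw Hfw] := Hlk w wY.
  have HLV : vertices (link (induced Y P) [set w]) = vertices (link Y [set w]) :&: P.
    apply/setP => x; rewrite in_setI !vert_link1.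
    rewrite [[set x; w] \in _]inE subUset !sub1set wP andbT.
    by rewrite andbA.
  have fwV : f w \in vertices K' by move: wP; rewrite inE.
  have HLK : vertices (link K' [set f w]) = vertices (link K [set f w]) :&: vertices K'.
    apply/setP => x; rewrite in_setI !vert_link1.
    apply/andP/andP => [[xn xK] | [/andP [xn xK] xV]].
      split; first by rewrite xn KK.
      by rewrite inE; apply: (HK' _ _ xK); rewrite sub1set !inE eqxx.
    split => //; apply: Hfull => //.
    by rewrite subUset !sub1set xV.
  split.
  + by move=> x y; rewrite HLV => /setIP [x1 _] /setIP [y1 _]; apply: Hinj.
  + by rewrite HLV imset_preim Himw -HLK.
  + move=> t; rewrite HLV subsetI => /andP [tL tP].
    rewrite (link_full KK Hfull) //; last by apply: imset_sub_vert.
    rewrite -Hfw //.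
    rewrite !link_mem; congr (_ && _).
    by rewrite inE subUset tP sub1set wP !andbT.
- move=> v vV; rewrite -(Hcnt v); last by apply: (subsetP (vert_sub KK)).
  apply: eq_card => x; rewrite !inE sub1set.
  case: (f x =P v) => [ex | ]; last by rewrite !andbF.
  by rewrite /P inE ex vV !andbT.
Qed.

End Maps.

Section Comp.
Variable W : finType.
Implicit Types (K A : {set {set W}}).

Lemma adj_sym K : symmetric (adj K).
Proof. by move=> x y; rewrite /adj eq_sym setUC. Qed.

Lemma connect_symK K x y : connect (adj K) x y = connect (adj K) y x.
Proof. exact: (sym_connect_sym (adj_sym K)). Qed.

Lemma comp_vert K x : Defs.comp K x \subset vertices K.
Proof. by apply/subsetP => y; rewrite inE => /andP []. Qed.

Lemma comp_self K x : x \in vertices K -> x \in Defs.comp K x.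
Proof. by move=> xV; rewrite inE xV connect0. Qed.

Lemma comp_eq K x y : y \in Defs.comp K x -> Defs.comp K y = Defs.comp K x.
Proof.
rewrite inE => /andP [yV cxy]; apply/setP => z; rewrite !inE; congr (_ && _).
apply/idP/idP => H; first exact: connect_trans cxy H.
by apply: connect_trans H; rewrite connect_symK.
Qed.

Lemma comps_mem K C x : C \in components K -> x \in C -> C = Defs.comp K x.
Proof. by move=> /imsetP [x0 _ ->] xC; rewrite (comp_eq xC). Qed.

Lemma comps_disj K C C' x : C \in components K -> C' \in components K ->
  x \in C -> x \in C' -> C = C'.
Proof. by move=> CK C'K xC xC'; rewrite (comps_mem CK xC) (comps_mem C'K xC'). Qed.

Lemma comps_vert K C x : C \in components K -> x \in C -> x \in vertices K.
Proof. by move=> CK xC; move: (xC); rewrite (comps_mem CK xC); apply: (subsetP (comp_vert K x)). Qed.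

Lemma connect_mono K K' x y : {subset K <= K'} -> connect (adj K) x y -> connect (adj K') x y.
Proof.
move=> KK; apply: connect_sub => a b; rewrite /adj => /andP [ab abK].
by apply: connect1; rewrite /adj ab KK.
Qed.

End Comp.

Section Lift.
Variables (W T : finType).

Lemma path_lift (A : {set {set W}}) (B : {set {set T}}) f u z :
  iso_on A B f -> simplicial_complex B -> u \in vertices A ->
  connect (adj B) (f u) z ->
  exists2 y, y \in vertices A & f y = z /\ connect (adj A) u y.
Proof.
move=> [Hinj Him Hf] HB uA /connectP [p Hp ->].
elim: p u uA Hp => [|b p IH] u uA /=; first by move=> _; exists u => //; split.
move=> /andP [Hb Hp].
have bV : b \in vertices B.
  move: Hb; rewrite /adj => /andP [_ HK]; rewrite inE; apply: (HB _ _ HK).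
  by rewrite sub1set !inE eqxx orbT.
move: bV; rewrite -Him => /imsetP [y yA eb]; subst b.
have [y' y'A [<- cy]] := IH y yA Hp.
exists y' => //; split => //.
apply: connect_trans cy; apply: connect1.
move: Hb; rewrite /adj => /andP [ne HK].
have -> : u != y by apply: contraNneq ne => ->.
rewrite Hf; first by rewrite imsetU1 imset_set1.
by apply/subsetP => q /set2P [] ->.
Qed.

End Lift.

Section Split.
Variables (W T : finType) (Y : {set {set W}}) (Kv Kr : {set {set T}}) (nu : W -> T).
Hypothesis KK : {subset Kr <= Kv}.
Hypothesis Hfull : full Kr Kv.
Hypothesis HKr : simplicial_complex Kr.
Hypothesis Hconn : connected Kr.
Let Pv := [set w | nu w \in vertices Kv].
Let Pr := [set w | nu w \in vertices Kr].
Let Zv := induced Y Pv.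
Let Zr := induced Y Pr.
Hypothesis HC : forall C, C \in components Zv -> iso_on (induced Zv C) Kv nu.

Lemma PrPv : Pr \subset Pv.
Proof.
apply/subsetP => w; rewrite !inE; exact: KK.
Qed.

Lemma ZrZv : {subset Zr <= Zv}.
Proof.
move=> t; rewrite !inE => /andP [-> tP] /=; exact: subset_trans tP PrPv.
Qed.

Lemma split_iso C : C \in components Zv -> iso_on (induced Zr (C :&: Pr)) Kr nu.
Proof.
move=> CZ.
have -> : induced Zr (C :&: Pr) = induced (induced Zv C) Pr.
  apply/setP => t; rewrite !inE subsetI.
  case: (t \in Y) => //=; case tPr: (t \subset Pr); rewrite ?andbF ?andbT //=.
  by rewrite (subset_trans tPr PrPv).
exact: iso_restr (HC CZ) KK Hfull.
Qed.

Lemma vert_Zr x : (x \in vertices Zr) = (x \in vertices Zv) && (x \in Pr).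
Proof.
rewrite !vert_induced; case xPr: (x \in Pr); rewrite ?andbF ?andbT //.
by rewrite (subsetP PrPv x xPr) andbT.
Qed.

Lemma split_key C x : C \in components Zv -> x \in C :&: Pr ->
  Defs.comp Zr x = C :&: Pr.
Proof.
move=> CZ /setIP [xC xPr].
have xZv : x \in vertices Zv by apply: comps_vert CZ xC.
have [Hinj Him Hf] := split_iso CZ.
have xA : x \in vertices (induced Zr (C :&: Pr)) by rewrite vert_induced vert_Zr xZv in_setI xC xPr.
apply/setP => y; apply/idP/idP.
  rewrite inE => /andP [yZr cxy]; move: (yZr); rewrite vert_Zr => /andP [_ yPr].
  rewrite inE yPr andbT (comps_mem CZ xC) inE.
  rewrite (subsetP (vert_sub ZrZv)) //=.
  exact: connect_mono ZrZv cxy.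
move=> /setIP [yC yPr].
have yZv : y \in vertices Zv by apply: comps_vert CZ yC.
have yA : y \in vertices (induced Zr (C :&: Pr)) by rewrite vert_induced vert_Zr yZv in_setI yC yPr.
have [_ Hc] := Hconn.
have nxV : nu x \in vertices Kr by rewrite -Him; apply: imset_f.
have nyV : nu y \in vertices Kr by rewrite -Him; apply: imset_f.
have [y' y'A [ey' cy']] := path_lift (split_iso CZ) HKr xA (Hc _ _ nxV nyV).
have {}ey' : y' = y by apply: Hinj.
subst y'.
rewrite inE; apply/andP; split.
  by move: yA; rewrite vert_induced => /andP [].
apply: connect_mono cy'; move=> t; rewrite inE => /andP [].
by [].
Qed.

Lemma split_nonempty C : C \in components Zv -> exists x, x \in C :&: Pr.
Proof.
move=> CZ; have [Hinj Him Hf] := split_iso CZ.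
have [/set0Pn [u uV] _] := Hconn.
move: uV; rewrite -Him => /imsetP [x xA _]; exists x.
by move: xA; rewrite vert_induced => /andP [].
Qed.

Lemma split_comp C : C \in components Zv -> C :&: Pr \in components Zr.
Proof.
move=> CZ; have [x xD] := split_nonempty CZ.
rewrite -(split_key CZ xD); apply: imset_f.
move: xD => /setIP [xC xPr]; rewrite vert_Zr xPr andbT.
exact: comps_vert CZ xC.
Qed.

Lemma split_all x : x \in vertices Zr ->
  Defs.comp Zv x \in components Zv /\ Defs.comp Zr x = Defs.comp Zv x :&: Pr.
Proof.
move=> xZr; move: (xZr); rewrite vert_Zr => /andP [xZv xPr].
have CZ : Defs.comp Zv x \in components Zv by apply: imset_f.
split => //; apply: split_key => //.
by rewrite inE comp_self.
Qed.

End Split.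
Unset Implicit Arguments. Set Strict Implicit. Set Printing Implicit Defensive.

Theorem claim5p1 (V : finType) (X : {set {set V}}) (d d1 : nat)
  (W : finType) (Y : {set {set W}}) (nu : W -> {set V}) (l : nat) :
  simplicial_complex X -> dimension X d -> clique_complex X ->
  3 * d1 + 2 <= d ->
  well_connected d1 X ->
  simplicial_complex Y ->
  lcover Y (faces_complex d1 X) nu l ->
  let Z := fun r : {set V} =>
    induced Y [set w | nu w \in vertices (faces_complex d1 (link X r))] in
  let good := fun r : {set V} => [&& r \in X, r != set0 & #|r| <= d1.+1] in
  exists Zc : {set V} -> 'I_l -> {set W},
    (forall r, good r ->
       [/\ injective (Zc r),
           [set Zc r i | i : 'I_l] = components (Z r) &
           forall i, iso_on (induced (Z r) (Zc r i)) (faces_complex d1 (link X r)) nu])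
    /\
    (forall r s, good r -> good s -> r \subset s ->
       exists pi : {perm 'I_l}, forall i j, (Zc s i \subset Zc r j) = (pi i == j)).
Proof.
move=> HX _ Hcl _ [Hwc Hsc] HY Hcov Z good.
pose Kr (r : {set V}) := faces_complex d1 (link X r).
pose Pr (r : {set V}) := [set w | nu w \in vertices (Kr r)].
pose E (v : V) (i : 'I_l) := nth set0 (enum (components (Z [set v]))) i.
pose Zc (r : {set V}) (i : 'I_l) := if [pick v in r] is Some v then E v i :&: Pr r else set0.
have Kr_simpl r : simplicial_complex (Kr r) by apply: F_simpl; apply: link_simpl.
have Kr_sub r : {subset Kr r <= faces_complex d1 X} by apply: F_mono; apply: link_sub.
have Kr_full (r : {set V}) : r \in X -> full (Kr r) (faces_complex d1 X).
  by move=> rX S SK; apply: F_full.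
have Kmono (r s : {set V}) : r \subset s -> {subset Kr s <= Kr r}.
  by move=> rs; apply: F_mono; apply: link_mono.
have Hgood (r : {set V}) : good r -> exists2 v, [pick v in r] = Some v & v \in r.
  move=> /and3P [_ rn _]; case: pickP => [v vr | H]; first by exists v.
  by case/set0Pn: rn => x; rewrite H.
have P1 : forall r, good r -> [/\ injective (Zc r), [set Zc r i | i : 'I_l] = components (Z r) &
     forall i, iso_on (induced (Z r) (Zc r i)) (Kr r) nu].
  move=> r gr; have [v pv vr] := Hgood r gr.
  move: (gr) => /and3P [rX _ rcard].
  have vX : [set v] \in X by apply: (HX _ _ rX); rewrite sub1set.
  have Hcv : lcover (Z [set v]) (Kr [set v]) nu l.
    exact: (cover_restr Hcov (Kr_simpl _) (Kr_sub _) (Kr_full _ vX)).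
  have [_ Hs] := Hsc v vX.
  have [Hcard Hiso] := Hs W (Z [set v]) nu l (@induced_simpl _ Y _ HY) Hcv.
  have KK : {subset Kr r <= Kr [set v]} by apply: Kmono; rewrite sub1set.
  have Hf : full (Kr r) (Kr [set v]).
    move=> S SK SV; apply: (Kr_full r rX _ _ SV); exact: Kr_sub SK.
  have Hconn : connected (Kr r) by apply: Hwc.
  have SN := split_nonempty KK Hf Hconn Hiso.
  have SC := split_comp KK Hf (Kr_simpl r) Hconn Hiso.
  have SA := split_all KK Hf (Kr_simpl r) Hconn Hiso.
  have SI := split_iso KK Hf Hiso.
  have ZcE i : Zc r i = E v i :&: Pr r by rewrite /Zc pv.
  have szE : size (enum (components (Z [set v]))) = l by rewrite -cardE.
  have Ecomp i : E v i \in components (Z [set v]).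
    by rewrite /E -mem_enum mem_nth // szE.
  have Einj i j : E v i = E v j -> i = j.
    move=> eij; apply: val_inj; apply/eqP.
    rewrite -(nth_uniq set0 (s:=enum (components (Z [set v]))) _ _ (enum_uniq _)) ?szE ?ltn_ord //.
    by apply/eqP.
  split.
  - move=> i j; rewrite !ZcE => eij.
    have [x xD] := SN _ (Ecomp i).
    have xD' := xD; rewrite eij in xD'.
    apply: Einj; apply: (comps_disj (x:=x) (Ecomp i) (Ecomp j)).
      by move: xD => /setIP [].
    by move: xD' => /setIP [].
  - apply/setP => C; apply/imsetP/idP => [[i _ ->] | CZ].
      by rewrite ZcE; apply: SC.
    have /imsetP [x xZ ->] := CZ.
    have [Cv eC] := SA x xZ.
    have iv : index (Defs.comp (Z [set v]) x) (enum (components (Z [set v]))) < l.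
      by rewrite -szE index_mem mem_enum.
    exists (Ordinal iv) => //.
    by rewrite ZcE /E /= nth_index ?mem_enum // eC.
  - by move=> i; rewrite ZcE; apply: SI.
exists Zc; split => [r gr | r s gr gs rs]; first exact: P1.
have [injr imr isor] := P1 r gr.
have [injs ims isos] := P1 s gs.
move: (gs) => /and3P [sX _ scard].
have PsPr : [set w | nu w \in vertices (Kr s)] \subset [set w | nu w \in vertices (Kr r)].
  have VV := vert_sub (Kmono r s rs).
  by apply/subsetP => w; rewrite inE => H; rewrite inE; exact: (subsetP VV _ H).
have ZsZr : {subset Z s <= Z r}.
  move=> t; rewrite /Z [t \in _]inE => /andP [tY tP].
  by rewrite inE tY (subset_trans tP PsPr).
have Cs i : Zc s i \in components (Z s) by rewrite -ims imset_f.
have Cr j : Zc r j \in components (Z r) by rewrite -imr imset_f.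
have nes i : exists x, x \in Zc s i.
  by have /imsetP [x0 x0V ->] := Cs i; exists x0; apply: comp_self.
have Hex i : exists j, Zc s i \subset Zc r j.
  have [x xi] := nes i.
  have xZs : x \in vertices (Z s) := comps_vert (Cs i) xi.
  have xZr : x \in vertices (Z r) := subsetP (vert_sub ZsZr) x xZs.
  have : Defs.comp (Z r) x \in [set Zc r j | j : 'I_l] by rewrite imr imset_f.
  case/imsetP => j _ ej; exists j; rewrite -ej (comps_mem (Cs i) xi).
  apply/subsetP => y; rewrite [y \in Defs.comp _ _]inE => /andP [yV cy].
  rewrite inE (subsetP (vert_sub ZsZr) y yV) /=; exact: connect_mono ZsZr cy.
have Huniq i j j' : Zc s i \subset Zc r j -> Zc s i \subset Zc r j' -> j = j'.
  have [x xi] := nes i; move=> h1 h2; apply: injr.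
  by apply: (comps_disj (x:=x) (Cr j) (Cr j')); [exact: subsetP h1 x xi | exact: subsetP h2 x xi].
pose g i := odflt i [pick j | Zc s i \subset Zc r j].
have gP i : Zc s i \subset Zc r (g i).
  rewrite /g; case: pickP => [j /= h | H] //=.
  by have [j h] := Hex i; move: (H j); rewrite /= h.
have gE i j : (Zc s i \subset Zc r j) = (g i == j).
  apply/idP/eqP => [h | <-]; last exact: gP.
  by apply: Huniq (gP i) h.
have ginj : injective g.
  move=> i i' e.
  have [/set0Pn [u uV] _] : connected (Kr s) by apply: Hwc.
  have [injA imA _] := isos i.
  have [injB imB _] := isos i'.
  have [injR _ _] := isor (g i).
  move: (uV); rewrite -imA => /imsetP [a aA ea].
  move: (uV); rewrite -imB => /imsetP [b bB eb].
  move: aA; rewrite vert_induced => /andP [aZs ai].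
  move: bB; rewrite vert_induced => /andP [bZs bi].
  have ar : a \in Zc r (g i) := subsetP (gP i) a ai.
  have br : b \in Zc r (g i) by rewrite e; exact: subsetP (gP i') b bi.
  have aZr := subsetP (vert_sub ZsZr) a aZs.
  have bZr := subsetP (vert_sub ZsZr) b bZs.
  have eab : a = b.
    apply: injR; [by rewrite vert_induced aZr ar | by rewrite vert_induced bZr br | by rewrite -ea -eb].
  apply: injs; apply: (comps_disj (x:=a) (Cs i) (Cs i')) => //; by rewrite eab.
exists (perm ginj) => i j; by rewrite permE gE.
Qed.
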